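(* Let $\mathcal O$ be a complete discrete valuation ring of characteristic zero with residue field of characteristic $p>0$. Let $\Lambda$ be an $\mathcal O$-order, $G$ a finite group and $\Gamma$ an $\mathcal O$-linear crossed product of $\Lambda$ and $G$. If $e\in\Lambda$ is an idempotent such that $e\Lambda\cong\alpha(e)\Lambda$ as right $\Lambda$-modules for every $\alpha\in\operatorname{Aut}_{\mathcal O}(\Lambda)$, then $e\Gamma e$ is an $\mathcal O$-linear crossed product of $e\Lambda e$ and $G$.
   Context: An $\mathcal O$-order is an $\mathcal O$-algebra free and finitely generated as an $\mathcal O$-module. A crossed product of a ring $R$ and $G$ is a $G$-graded ring $A=\bigoplus_{g\in G}A_g$ with $A_1=R$ such that each $A_g$ contains a unit of $A$; it is $\mathcal O$-linear if $R$ is an $\mathcal O$-algebra and the image of $\mathcal O$ under $R\hookrightarrow A$ lies in the centre of $A$. Here $e\Gamma e$ is graded by $(e\Gamma e)_g=e\Gamma_g e$. *)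

(* Defs.v *)
From HB Require Import structures.
From mathcomp Require Import all_boot all_order fingroup all_algebra.
Set Implicit Arguments. Unset Strict Implicit. Unset Printing Implicit Defensive.
Import GRing.Theory.
Local Open Scope ring_scope.

Definition rdvd (O : comPzRingType) (y x : O) : Prop := exists c, x = c * y.

Definition is_DVR_unif (O : idomainType) (pi : O) : Prop :=
  [/\ pi != 0, pi \isn't a GRing.unit &
      forall x : O, x != 0 -> exists u n, u \is a GRing.unit /\ x = u * pi ^+ n].

Definition pi_complete (O : idomainType) (pi : O) : Prop :=
  forall s : nat -> O,
    (forall n, exists N, forall m k, (N <= m)%N -> (N <= k)%N ->
        rdvd (pi ^+ n) (s m - s k)) ->
    exists l, forall n, exists N, forall m, (N <= m)%N -> rdvd (pi ^+ n) (s m - l).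

(* Complete DVR of characteristic 0 whose residue field O/(pi) has characteristic p. *)
Definition complete_DVR_char0_residue (O : idomainType) (p : nat) : Prop :=
  exists pi : O,
    [/\ is_DVR_unif pi, pi_complete pi,
        (forall n : nat, n%:R = 0 :> O -> n = 0%N),
        prime p & rdvd pi p%:R].

Definition is_O_order (O : comNzRingType) (L : algType O) : Prop :=
  exists n (b : 'I_n -> L),
    (forall x : L, exists c : 'I_n -> O, x = \sum_(i < n) c i *: b i) /\
    (forall c : 'I_n -> O, \sum_(i < n) c i *: b i = 0 -> forall i, c i = 0).

Definition is_O_aut (O : comNzRingType) (L : algType O) (a : L -> L) : Prop :=
  [/\ bijective a, (forall x y, a (x + y) = a x + a y),
      (forall x y, a (x * y) = a x * a y), a 1 = 1 &
      (forall (k : O) x, a (k *: x) = k *: a x)].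

Definition rideal (R : nzRingType) (x : R) : R -> Prop := fun y => exists a, y = x * a.

Definition right_mod_iso (R : nzRingType) (M N : R -> Prop) : Prop :=
  exists f : R -> R,
    [/\ (forall x, M x -> N (f x)),
        (forall y, N y -> exists x, M x /\ f x = y),
        (forall x y, M x -> M y -> f x = f y -> x = y),
        (forall x y, M x -> M y -> f (x + y) = f x + f y) &
        (forall x a, M x -> f (x * a) = f x * a)].

(* Crossed products, in a form applicable both to a ring T itself and to a
   corner ring (S, one) of T:
   - S : the carrier (subset of T) of the ring, with identity [one];
   - A g : the homogeneous component of degree g;
   - the base ring is the subring B of L (identity oneB), embedded by iota
     onto the degree-1 component;
   - each component contains a unit of the ring (S, one);
   - O-linear: the image of O (k |-> iota (k *: oneB)) is central in S. *)
Definition crossed_product_in (O : comNzRingType) (L : algType O)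
    (T : nzRingType) (gT : finGroupType)
    (S : T -> Prop) (one : T) (A : gT -> T -> Prop)
    (B : L -> Prop) (oneB : L) (iota : L -> T) : Prop :=
  [/\
      [/\ (forall g x, A g x -> S x),
      (forall g, A g 0 /\ forall x y, A g x -> A g y -> A g (x - y)) &
      (forall g h x y, A g x -> A h y -> A (g * h)%g (x * y))],
      (forall x, S x -> exists f : gT -> T, (forall g, A g (f g)) /\ x = \sum_(g : gT) f g) /\
      (forall f : gT -> T, (forall g, A g (f g)) -> \sum_(g : gT) f g = 0 ->
           forall g, f g = 0),
      [/\ (forall x, A 1%g x <-> exists2 b, B b & x = iota b),
          (forall a b, B a -> B b -> iota a = iota b -> a = b),
          (forall a b, B a -> B b -> iota (a + b) = iota a + iota b),
          (forall a b, B a -> B b -> iota (a * b) = iota a * iota b) &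
          iota oneB = one],
      (forall g, exists u, A g u /\ exists v, S v /\ u * v = one /\ v * u = one) &
      (forall (k : O) x, S x -> iota (k *: oneB) * x = x * iota (k *: oneB))].

(* Main.v *)
Require Import Defs.
From HB Require Import structures.
From mathcomp Require Import all_boot all_order fingroup all_algebra.
From Stdlib Require Import ClassicalEpsilon.
Import GRing.Theory.
Local Open Scope ring_scope.

Theorem proposition4p15
    (O : idomainType) (p : nat)
    (hO : complete_DVR_char0_residue O p)
    (L : algType O) (hL : is_O_order L)
    (gT : finGroupType)
    (T : nzRingType) (iota : {rmorphism L -> T}) (A : gT -> T -> Prop)
    (hG : crossed_product_in (fun _ => True) 1 A (fun _ => True) 1 iota)
    (e : L) (he : e * e = e)
    (hiso : forall a : L -> L, is_O_aut a ->
              right_mod_iso (rideal e) (rideal (a e))) :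
  crossed_product_in
    (fun y => exists x, y = iota e * x * iota e)
    (iota e)
    (fun g y => exists x, A g x /\ y = iota e * x * iota e)
    (fun b => exists a, b = e * a * e) e iota.
Proof.
case: hG => [[hS hA0 hmul] [hdec huniq] [hiota1 hinj hadd hmulB hone] hunit hlin].
have hsub : forall g x y, A g x -> A g y -> A g (x - y) by move=> g; case: (hA0 g).
have h0 : forall g, A g 0 by move=> g; case: (hA0 g).
have hI : forall b, A 1%g (iota b) by move=> b; apply/hiota1; exists b.
have hinj' : forall a b, iota a = iota b -> a = b by move=> a b; apply: hinj.
have hE : iota e * iota e = iota e by rewrite -rmorphM he.
have hmulI : forall g x b, A g x -> A g (x * iota b).
  by move=> g x b Hx; rewrite -[g]mulg1; apply: hmul.
have hImul : forall g x b, A g x -> A g (iota b * x).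
  by move=> g x b Hx; rewrite -[g]mul1g; apply: hmul.
have invA : forall g u v, A g u -> u * v = 1 -> v * u = 1 -> A g^-1%g v.
  move=> g u v Au uv vu.
  have [c [Ac vE]] := hdec v I.
  pose F k := u * c (g^-1 * k)%g - (if k == 1%g then 1 else 0).
  have AF : forall k, A k (F k).
    move=> k; apply: hsub.
      by have := hmul g (g^-1 * k)%g _ _ Au (Ac _); rewrite mulgA mulgV mul1g.
    by case: eqP => [->|_]; [rewrite -(rmorph1 iota); apply: hI | apply: h0].
  have sF : \sum_k F k = 0.
    have -> : \sum_(k : gT) F k = u * v - \sum_(k : gT) (if k == 1%g then 1 else 0 : T).
      have inj : injective (fun k : gT => (g^-1 * k)%g) by move=> x y /mulgI.
      by rewrite /F sumrB vE mulr_sumr [in RHS](reindex_inj inj).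
    by rewrite uv -big_mkcond big_pred1_eq subrr.
  have Fz := huniq F AF sF.
  have cz : forall h, h != g^-1%g -> c h = 0.
    move=> h hne; have := Fz (g * h)%g; rewrite /F mulgA mulVg mul1g.
    case: eqP => [gh1|_].
      by exfalso; move/eqP: hne; apply; rewrite -(mulKg g h) gh1 mulg1.
    by rewrite subr0 => uc; rewrite -[c h]mul1r -vu -mulrA uc mulr0.
  rewrite vE (bigD1 g^-1%g) //= big1 ?addr0; first exact: Ac.
  by move=> h /cz.
split.
- split.
  + by move=> g y [x [_ ->]]; exists x.
  + move=> g; split; first by exists 0; rewrite mulr0 mul0r.
    move=> x y [x1 [Ax ->]] [y1 [Ay ->]]; exists (x1 - y1); split; first exact: hsub.
    by rewrite mulrBr mulrBl.
  + move=> g h x y [x1 [Ax ->]] [y1 [Ay ->]]; exists (x1 * iota e * y1); split.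
      by apply: hmul => //; apply: hmulI.
    by rewrite !mulrA -[iota e * x1 * iota e * iota e]mulrA hE.
- split.
  + move=> x [x1 ->]; have [c [Ac ->]] := hdec x1 I.
    exists (fun g => iota e * c g * iota e); split; first by move=> g; exists (c g).
    by rewrite mulr_sumr mulr_suml.
  + move=> f Af sf; apply: huniq => // g.
    have [x [Ax ->]] := Af g; by apply: hmulI; apply: hImul.
- split.
  + move=> x; split.
      move=> [x1 [Ax ->]]; have /hiota1 [b _ ->] := Ax.
      by exists (e * b * e); [exists b | rewrite !rmorphM].
    move=> [b [a ->] ->]; exists (iota a); split; first exact: hI.
    by rewrite !rmorphM.
  + by move=> a b _ _; apply: hinj'.
  + by move=> a b _ _; rewrite rmorphD.
  + by move=> a b _ _; rewrite rmorphM.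
  + by [].
- move=> g.
  have [u [Au [v [_ [uv vu]]]]] := hunit g.
  have Av := invA g u v Au uv vu.
  have exa : forall x, exists y, iota y = u * iota x * v.
    move=> x; have : A 1%g (u * iota x * v).
      by rewrite -(mulgV g); apply: hmul => //; apply: hmulI.
    by case/hiota1 => b _ ->; exists b.
  have exb : forall x, exists y, iota y = v * iota x * u.
    move=> x; have : A 1%g (v * iota x * u).
      by rewrite -(mulVg g); apply: hmul => //; apply: hmulI.
    by case/hiota1 => b _ ->; exists b.
  pose a x := proj1_sig (constructive_indefinite_description _ (exa x)).
  have aE : forall x, iota (a x) = u * iota x * v :=
    fun x => proj2_sig (constructive_indefinite_description _ (exa x)).
  pose b x := proj1_sig (constructive_indefinite_description _ (exb x)).
  have bE : forall x, iota (b x) = v * iota x * u :=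
    fun x => proj2_sig (constructive_indefinite_description _ (exb x)).
  have autA : is_O_aut a.
    split.
    - exists b => x; apply: hinj'; rewrite ?aE ?bE ?aE.
        by rewrite !mulrA vu mul1r -mulrA vu mulr1.
      by rewrite !mulrA uv mul1r -mulrA uv mulr1.
    - by move=> x y; apply: hinj'; rewrite rmorphD !aE rmorphD mulrDr mulrDl.
    - move=> x y; apply: hinj'; rewrite rmorphM !aE rmorphM.
      by rewrite !mulrA -[u * iota x * v * u]mulrA vu mulr1.
    - by apply: hinj'; rewrite aE !rmorph1 mulr1 uv.
    - move=> k x; apply: hinj'.
      have sc : forall z : L, k *: z = k *: 1 * z by move=> z; rewrite -scalerAl mul1r.
      rewrite aE [k *: x]sc [k *: a x]sc !(rmorphM iota) aE.
      by rewrite !mulrA -(hlin k u I).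
  have [phi [phiM phiS phiI phiD phiR]] := hiso a autA.
  set f := a e.
  have fE : iota f = u * iota e * v by rewrite /f aE.
  have ff : f * f = f.
    apply: hinj'; rewrite rmorphM fE !mulrA -[u * iota e * v * u]mulrA vu mulr1.
    by rewrite -[u * iota e * iota e]mulrA hE.
  have Me : rideal e e by exists 1; rewrite mulr1.
  have [a1 a0E] := phiM e Me.
  have [bb [[b1 bbE] phib]] := phiS f (ex_intro _ 1 (esym (mulr1 f))).
  have fa : f * phi e = phi e by rewrite a0E mulrA ff.
  have ae : phi e * e = phi e by rewrite -phiR // he.
  have eb : e * bb = bb by rewrite bbE mulrA he.
  have bf : bb * f = bb.
    apply: phiI => //; first by exists (b1 * f); rewrite bbE mulrA.
      by exists b1.
    by rewrite phiR ?phib ?ff //; exists b1.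
  have ab : phi e * bb = f by rewrite -phiR // eb.
  have ba : bb * phi e = e.
    apply: phiI => //; first by exists (b1 * phi e); rewrite bbE mulrA.
    by rewrite phiR ?phib ?fa //; exists b1.
  have ue : u * iota e = iota f * u by rewrite fE -[RHS]mulrA vu mulr1.
  have ev : v * iota f = iota e * v by rewrite fE !mulrA vu mul1r.
  exists (iota bb * u); split.
    exists (iota bb * u); split; first exact: hImul.
    rewrite [in RHS]mulrA -[iota e * iota bb]rmorphM eb.
    by rewrite -[in RHS]mulrA ue mulrA -rmorphM bf.
  exists (v * iota (phi e)); split.
    exists (v * iota (phi e)).
    rewrite [in RHS]mulrA -ev -!mulrA -!rmorphM ae fa //.
  split.
    by rewrite mulrA -[iota bb * u * v]mulrA uv mulr1 -rmorphM ba.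
  rewrite -mulrA [iota (phi e) * _]mulrA -rmorphM ab fE !mulrA vu mul1r.
  by rewrite -mulrA vu mulr1.
- move=> k x [y ->].
  have hk : iota (k *: e) = iota (k *: 1) * iota e by rewrite -rmorphM -scalerAl mul1r.
  have c := hlin k (iota e * y * iota e) I.
  have E1 : iota e * (iota e * y * iota e) = iota e * y * iota e by rewrite !mulrA hE.
  have E2 : iota e * y * iota e * iota e = iota e * y * iota e by rewrite -mulrA hE.
  rewrite hk -[LHS]mulrA E1 [in RHS]mulrA -c -[in RHS]mulrA E2.
  by [].
Qed.
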